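(* Let $n>5$ and let $f$ be a permutation of $V(\overline{C_n})$. Suppose there exist a vertex $v$ and two distinct vertices $u,w$, both different from $v$, such that $v$ is adjacent in $\overline{C_n}$ to neither $u$ nor $w$, while $f(v)$ is adjacent in $\overline{C_n}$ to both $f(u)$ and $f(w)$. Then $\delta_f(\overline{C_n})>4$.
   Context: $C_n$ is the cycle on vertices $v_1,\dots,v_n$ (with $v_i$ adjacent to $v_{i+1}$, indices mod $n$), and $\overline{C_n}$ is its complement: two distinct vertices are adjacent in $\overline{C_n}$ iff they are not adjacent in $C_n$. $d(x,y)$ denotes the distance in $\overline{C_n}$. For a permutation $f$ of the vertex set and distinct vertices $x,y$, $\delta_f(x,y)=|d(x,y)-d(f(x),f(y))|$, and $\delta_f(\overline{C_n})=\sum\delta_f(x,y)$ over all unordered pairs $\{x,y\}$ of distinct vertices. *)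

(* Defs.v *)
From mathcomp Require Import all_boot all_fingroup.
Set Implicit Arguments. Unset Strict Implicit. Unset Printing Implicit Defensive.

(* Vertices of C_n are 'I_n (v_{i+1} <-> i); cycle edges i ~ i+1 mod n. *)
Definition cyc_adj (n : nat) (x y : 'I_n) : bool :=
  ((x.+1 %% n) == y) || ((y.+1 %% n) == x).

Definition cadj (n : nat) (x y : 'I_n) : bool := (x != y) && ~~ cyc_adj x y.

Fixpoint ball (n : nat) (k : nat) (x : 'I_n) : {set 'I_n} :=
  match k with
  | 0 => [set x]
  | k'.+1 => ball k' x :|: [set y | [exists z in ball k' x, cadj z y]]
  end.

(* Graph distance in the complement of C_n: least k with y in ball k x.
   (If unreachable, returns n; never happens for n > 5 since the graph is connected.) *)
Definition cdist (n : nat) (x y : 'I_n) : nat :=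
  let fix go (k fuel : nat) := match fuel with
    | 0 => k
    | fuel'.+1 => if y \in ball k x then k else go k.+1 fuel' end
  in go 0 n.

Definition delta_pair (n : nat) (f : {perm 'I_n}) (x y : 'I_n) : nat :=
  let a := cdist x y in let b := cdist (f x) (f y) in (a - b) + (b - a).
(* = |a - b| on nat *)

Definition delta (n : nat) (f : {perm 'I_n}) : nat :=
  \sum_(x : 'I_n) \sum_(y : 'I_n | x < y) delta_pair f x y.

(* Main.v *)
Require Import Defs.
Set Implicit Arguments. Unset Strict Implicit.
From mathcomp Require Import all_boot all_fingroup zify.

Lemma modS1 (n r : nat) : r < n -> r.+1 %% n = if r.+1 < n then r.+1 else 0.
Proof.
move=> h; case: ifP => h2; first by rewrite modn_small.
have -> : r.+1 = n by lia.
by rewrite modnn.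
Qed.

Lemma modS3 (n r : nat) : 3 <= n -> r < n -> (r + 3) %% n = if r + 3 < n then r + 3 else r + 3 - n.
Proof.
move=> h1 h2. case: ifP=> h. by rewrite modn_small.
have e: r + 3 = (r + 3 - n) + n by lia.
rewrite e modnDr modn_small //; lia.
Qed.

Lemma sum_sub (n : nat) (F : 'I_n -> nat) (s : seq 'I_n) : uniq s ->
  \sum_(i <- s) F i <= \sum_i F i.
Proof.
move=> us; rewrite big_uniq //.
rewrite [X in _ <= X](bigID (mem s)) /=.
exact: leq_addr.
Qed.

Lemma row_lb (n : nat) (F : 'I_n -> nat) (s : seq 'I_n) : uniq s ->
  (forall y, y \in s -> 0 < F y) -> size s <= \sum_i F i.
Proof.
move=> us h; apply: leq_trans (sum_sub F us).
have -> : size s = \sum_(i <- s) 1 by rewrite sum1_size.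
rewrite big_seq_cond [X in _ <= X]big_seq_cond.
by apply: leq_sum => i /andP [hi _]; apply: h.
Qed.

Lemma double (n : nat) (F : 'I_n -> 'I_n -> nat) (Fs : forall x y, F x y = F y x)
  (F0 : forall x, F x x = 0) :
  \sum_(x : 'I_n) \sum_(y : 'I_n) F x y = 2 * \sum_(x : 'I_n) \sum_(y : 'I_n | x < y) F x y.
Proof.
have e : forall x : 'I_n, \sum_(y : 'I_n) F x y = \sum_(y : 'I_n) (if x < y then F x y else 0) + \sum_(y : 'I_n) (if y < x then F x y else 0).
  move=> x; rewrite -big_split /=; apply: eq_bigr => y _.
  case: (ltngtP x y) => h; rewrite ?addn0 //.
  by have -> : x = y by apply: val_inj. 
rewrite (eq_bigr _ (fun x _ => e x)) big_split /= [X in _ + X]exchange_big /=.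
have -> : \sum_(j : 'I_n) \sum_(i : 'I_n) (if j < i then F i j else 0) = \sum_(x : 'I_n) \sum_(y : 'I_n) (if x < y then F x y else 0).
  by apply: eq_bigr => x _; apply: eq_bigr => y _; rewrite Fs.
rewrite addnn -mul2n; congr (2 * _); apply: eq_bigr => x _.
by rewrite [RHS]big_mkcond.
Qed.

Lemma sum_eq1 (n : nat) (j : 'I_n) : \sum_(x : 'I_n) (x == j : nat) = 1.
Proof.
rewrite (bigD1 j) //= eqxx big1 // => i /negbTE ->. by [].
Qed.

Lemma cyc_adj_sym (n : nat) (x y : 'I_n) : cyc_adj x y = cyc_adj y x.
Proof. by rewrite /cyc_adj orbC. Qed.

Lemma cadj_sym (n : nat) (x y : 'I_n) : cadj x y = cadj y x.
Proof. by rewrite /cadj cyc_adj_sym eq_sym. Qed.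

Lemma cyc_adj_irr (n : nat) (x : 'I_n) : 1 < n -> ~~ cyc_adj x x.
Proof.
move=> hn; rewrite /cyc_adj orbb; have hx := ltn_ord x.
rewrite modS1 //; case: ifP => h; apply/eqP; lia.
Qed.

Lemma three_nbrs (n : nat) (x a b c : 'I_n) : 2 < n ->
  cyc_adj x a -> cyc_adj x b -> cyc_adj x c -> a != b -> a != c -> b != c -> False.
Proof.
move=> hn; rewrite /cyc_adj -!val_eqE /=.
have := ltn_ord x; have := ltn_ord a; have := ltn_ord b; have := ltn_ord c.
move: (val x) (val a) (val b) (val c) => x' a' b' c' hc hb ha hx.
rewrite !modS1 //.
repeat case: ifP => ?; move=> /orP [] /eqP ? /orP [] /eqP ? /orP [] /eqP ? /eqP ? /eqP ? /eqP ?; lia.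
Qed.

Lemma witness (n : nat) (a b : 'I_n) : 5 < n -> a.+1 %% n == b ->
  exists z : 'I_n, cadj a z && cadj z b.
Proof.
move=> hn hab.
have hz : (a + 3) %% n < n by rewrite ltn_mod; lia.
exists (Ordinal hz).
rewrite /cadj /cyc_adj -!val_eqE /=.
move/eqP: hab => <-.
have := ltn_ord a; move: (val a) => a' ha.
rewrite (@modS3 n a'); [|lia|lia].
rewrite (@modS1 n a') //.
case: ifP => h1; case: ifP => h2; rewrite ?modS1; try lia; repeat case: ifP => ?; 
 apply/andP; split; (apply/andP; split; [apply/eqP; lia| apply/negP; move/orP; case; move/eqP; lia]).
Qed.

Lemma ex1 (n : nat) (x y : 'I_n) : [exists z in [set x], cadj z y] = cadj x y.
Proof.
apply/existsP/idP => [[z /andP [/set1P -> //]] | h]; by exists x; rewrite in_set1 eqxx.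
Qed.

Lemma cdistE (n : nat) (x y : 'I_n) : 5 < n ->
  cdist x y = if x == y then 0 else if cyc_adj x y then 2 else 1.
Proof.
move: x y; case: n => [|[|[|m]]] // x y hn.
rewrite /cdist /=.
rewrite !inE ex1 eq_sym.
case: eqP => [//|hxy].
have hne : (x != y) = true by apply/eqP => e; apply: hxy; rewrite e.
case hc: (cyc_adj x y) => /=; last by rewrite /cadj hne hc.
have -> : cadj x y = false by rewrite /cadj hc andbF.
have [z hz] : exists z : 'I_m.+3, cadj x z && cadj z y.
  move: hc; rewrite /cyc_adj => /orP [] h; first exact: witness.
  have [z /andP [h1 h2]] := witness hn h.
  by exists z; rewrite cadj_sym h2 cadj_sym h1.
case: existsP => // [[]]; exists z; move/andP: hz => [h1 h2].
by rewrite !inE ex1 h1 h2 orbT.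
Qed.

Lemma nbrs (n : nat) (x : 'I_n) : 2 < n ->
  exists p1 p2 : 'I_n, [/\ p1 != p2, cyc_adj x p1 & cyc_adj x p2].
Proof.
move=> hn; have hx := ltn_ord x.
have h1 : x.+1 %% n < n by rewrite ltn_mod; lia.
have h2 : (if nat_of_ord x == 0 then n - 1 else (nat_of_ord x) - 1) < n.
  by case: ifP => _; lia.
exists (Ordinal h1), (Ordinal h2).
rewrite /cyc_adj -!val_eqE /= (modS1 hx) (modS1 h2).
move: hx h2; case: (nat_of_ord x) => [|k] hk h2 /=; rewrite ?subn0;
repeat case: ifP => ?; split => //; try (rewrite ?orbT ?eqxx //); try (apply/orP; right); apply/eqP; lia.
Qed.
Lemma dp_sym (n : nat) (f : {perm 'I_n}) x y : 5 < n -> delta_pair f x y = delta_pair f y x.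
Proof.
move=> hn; rewrite /delta_pair !cdistE // (eq_sym y) (eq_sym (f y)) (cyc_adj_sym y) (cyc_adj_sym (f y)).
by rewrite addnC.
Qed.

Lemma dp_diag (n : nat) (f : {perm 'I_n}) x : 5 < n -> delta_pair f x x = 0.
Proof. by move=> hn; rewrite /delta_pair !cdistE // !eqxx. Qed.

Lemma dp_pos (n : nat) (f : {perm 'I_n}) x y : 5 < n -> x != y ->
  cyc_adj x y != cyc_adj (f x) (f y) -> 0 < delta_pair f x y.
Proof.
move=> hn hxy hc; rewrite /delta_pair !cdistE // (negbTE hxy).
have -> : (f x == f y) = false by apply/negbTE; apply: contra hxy => /eqP /perm_inj ->.
by move: hc; case: (cyc_adj x y); case: (cyc_adj (f x) (f y)).
Qed.

Theorem lemma2p4 (n : nat) (f : {perm 'I_n}) (v u w : 'I_n) :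
  5 < n ->
  u != w -> u != v -> w != v ->
  ~~ cadj v u -> ~~ cadj v w ->
  cadj (f v) (f u) -> cadj (f v) (f w) ->
  4 < delta f.
Proof.
move=> hn huw huv hwv nvu nvw fvu fvw.
have h2 : 2 < n by lia.
have h1 : 1 < n by lia.
have cvu : cyc_adj v u by move: nvu; rewrite /cadj eq_sym huv /= negbK.
have cvw : cyc_adj v w by move: nvw; rewrite /cadj eq_sym hwv /= negbK.
have ncfu : ~~ cyc_adj (f v) (f u) by case/andP: fvu.
have ncfw : ~~ cyc_adj (f v) (f w) by case/andP: fvw.
have [p1 [p2 [hp12 hp1 hp2]]] := nbrs (f v) h2.
set a := (f^-1)%g p1; set b := (f^-1)%g p2.
have fa : f a = p1 by rewrite /a permKV.
have fb : f b = p2 by rewrite /b permKV.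
have ha : cyc_adj (f v) (f a) by rewrite fa.
have hb : cyc_adj (f v) (f b) by rewrite fb.
have hau : a != u by apply/eqP => e; move: ncfu; rewrite -e ha.
have haw : a != w by apply/eqP => e; move: ncfw; rewrite -e ha.
have hbu : b != u by apply/eqP => e; move: ncfu; rewrite -e hb.
have hbw : b != w by apply/eqP => e; move: ncfw; rewrite -e hb.
have hab : a != b by apply/eqP => e; move: hp12; rewrite -fa -fb e eqxx.
have hav : a != v by apply/eqP => e; move: ha; rewrite e; move/negP: (cyc_adj_irr (f v) h1).
have hbv : b != v by apply/eqP => e; move: hb; rewrite e; move/negP: (cyc_adj_irr (f v) h1).
have nva : ~~ cyc_adj v a.
  apply/negP => h; apply: (three_nbrs h2 cvu cvw h) => //; by rewrite eq_sym.
have nvb : ~~ cyc_adj v b.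
  apply/negP => h; apply: (three_nbrs h2 cvu cvw h) => //; by rewrite eq_sym.
have ncuv : ~~ cyc_adj (f u) (f v) by rewrite cyc_adj_sym.
have cuv : cyc_adj u v by rewrite cyc_adj_sym.
have [c [hcv hcu hc1 hc2]] : exists c, [/\ c != v, c != u, cyc_adj (f u) (f c) & ~~ cyc_adj u c].
  have [q1 [q2 [hq12 hq1 hq2]]] := nbrs (f u) h2.
  set c1 := (f^-1)%g q1; set c2 := (f^-1)%g q2.
  have fc1 : f c1 = q1 by rewrite /c1 permKV.
  have fc2 : f c2 = q2 by rewrite /c2 permKV.
  have hc1 : cyc_adj (f u) (f c1) by rewrite fc1.
  have hc2 : cyc_adj (f u) (f c2) by rewrite fc2.
  have hc1v : c1 != v by apply/eqP => e; move: ncuv; rewrite -e hc1.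
  have hc2v : c2 != v by apply/eqP => e; move: ncuv; rewrite -e hc2.
  have hc1u : c1 != u by apply/eqP => e; move: hc1; rewrite e; move/negP: (cyc_adj_irr (f u) h1).
  have hc2u : c2 != u by apply/eqP => e; move: hc2; rewrite e; move/negP: (cyc_adj_irr (f u) h1).
  have hc12 : c1 != c2 by apply/eqP => e; move: hq12; rewrite -fc1 -fc2 e eqxx.
  case: (boolP (cyc_adj u c1)) => h.
    exists c2; split => //; apply/negP => h'.
    by apply: (three_nbrs h2 cuv h h') => //; rewrite eq_sym.
  by exists c1.
have D := double (fun x y => dp_sym f x y hn) (fun x => dp_diag f x hn).
suff : 9 <= \sum_(x : 'I_n) \sum_(y : 'I_n) delta_pair f x y.
  move=> h; have : 9 <= 2 * delta f by rewrite /delta -D.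
  move: (delta f) => k; clear; lia.
have us : uniq [:: v; u; w; a; b].
  rewrite /= !inE !negb_or; repeat (apply/andP; split); by [|rewrite eq_sym].
apply: leq_trans (sum_sub _ us).
rewrite !big_cons big_nil.
have pos : forall x y, x != y -> cyc_adj x y != cyc_adj (f x) (f y) -> 0 < delta_pair f x y.
  by move=> x y; apply: dp_pos.
have r1 : 4 <= \sum_(y : 'I_n) delta_pair f v y.
  have us1 : uniq [:: u; w; a; b].
    rewrite /= !inE !negb_or; repeat (apply/andP; split); by [|rewrite eq_sym].
  apply: (row_lb us1) => y; rewrite !inE => /or4P [] /eqP ->; (apply: pos; [by [|rewrite eq_sym] | ]).
  - by rewrite cvu (negbTE ncfu).
  - by rewrite cvw (negbTE ncfw).
  - by rewrite ha (negbTE nva).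
  - by rewrite hb (negbTE nvb).
have r2 : 2 <= \sum_(y : 'I_n) delta_pair f u y.
  have us1 : uniq [:: v; c].
    by rewrite /= !inE eq_sym hcv.
  apply: (row_lb us1) => y; rewrite !inE => /orP [] /eqP ->; (apply: pos; [by [|rewrite eq_sym] | ]).
  - by rewrite cuv (negbTE ncuv).
  - by rewrite hc1 (negbTE hc2).
have rv : forall x, x != v -> cyc_adj x v != cyc_adj (f x) (f v) -> 1 <= \sum_(y : 'I_n) delta_pair f x y.
  move=> x hx hc; have us1 : uniq [:: v] by [].
  by apply: (row_lb us1) => y; rewrite !inE => /eqP ->; apply: pos.
have r3 := rv w hwv.
have r4 := rv a hav.
have r5 := rv b hbv.
rewrite cyc_adj_sym (cyc_adj_sym (f w)) cvw (negbTE ncfw) in r3.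
rewrite cyc_adj_sym (cyc_adj_sym (f a)) ha (negbTE nva) in r4.
rewrite cyc_adj_sym (cyc_adj_sym (f b)) hb (negbTE nvb) in r5.
exact: (leq_trans _ (leq_add r1 (leq_add r2 (leq_add (r3 isT) (leq_add (r4 isT) (leq_add (r5 isT) (leq0n 0))))))).
Qed.
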